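(* Let $A=B[x;\alpha,\delta]_p$ be a Poisson polynomial algebra over a field $k$ of characteristic zero, with $\delta$ locally nilpotent and $\alpha\delta=\delta(\alpha+s)$ for some $s\in k^\times$. Then the map $\theta:B\to B[x^{\pm1}]$, $\theta(b)=\sum_{n\ge0}\frac{1}{n!}\left(\frac{-1}{s}\right)^n\delta^n(b)x^{-n}$, is a Poisson homomorphism from $B$ to $B[x^{\pm1};\alpha,\delta]_p$.
   Context: If $B$ is a Poisson algebra, $\alpha$ a Poisson derivation of $B$ and $\delta$ a derivation of $B$ with $\delta(\{a,b\})=\{\delta(a),b\}+\{a,\delta(b)\}+\alpha(a)\delta(b)-\delta(a)\alpha(b)$ for $a,b\in B$, then $B[x;\alpha,\delta]_p$ is $B[x]$ with the unique Poisson bracket extending that of $B$ with $\{x,b\}=\alpha(b)x+\delta(b)$, and $B[x^{\pm1};\alpha,\delta]_p$ is the unique extension of this Poisson structure to $B[x^{\pm1}]$. A Poisson homomorphism is a $k$-algebra homomorphism preserving brackets. *)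

(* Defs.v *)
From HB Require Import structures.
From mathcomp Require Import all_boot all_order all_algebra.
Set Implicit Arguments. Unset Strict Implicit. Unset Printing Implicit Defensive.
Import Order.TTheory GRing.Theory Num.Theory.
Local Open Scope ring_scope.

Section PoissonDefs.
Variable k : fieldType.

Definition kalg_hom (A C : comAlgType k) (f : A -> C) : Prop :=
  [/\ forall (c : k) (a b : A), f (c *: a + b) = c *: f a + f b,
      forall a b : A, f (a * b) = f a * f b
    & f 1 = 1].

Definition poisson_bracket (A : comAlgType k) (br : A -> A -> A) : Prop :=
  [/\ (forall (c : k) (a b d : A), br (c *: a + b) d = c *: br a d + br b d),
      (forall (c : k) (a b d : A), br d (c *: a + b) = c *: br d a + br d b),
      (forall a : A, br a a = 0),
      (forall a b d : A, br a (br b d) + br b (br d a) + br d (br a b) = 0)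
    & (forall a b d : A, br a (b * d) = br a b * d + b * br a d)].

Definition derivation (A : comAlgType k) (D : A -> A) : Prop :=
  (forall (c : k) (a b : A), D (c *: a + b) = c *: D a + D b) /\
  (forall a b : A, D (a * b) = D a * b + a * D b).

Definition poisson_derivation (A : comAlgType k) (br : A -> A -> A) (D : A -> A)
  : Prop :=
  derivation D /\ (forall a b : A, D (br a b) = br (D a) b + br a (D b)).

(* The twisted compatibility condition required of delta in B[x; alpha, delta]_p. *)
Definition skew_poisson_compat (A : comAlgType k) (br : A -> A -> A)
  (al de : A -> A) : Prop :=
  forall a b : A,
    de (br a b) = br (de a) b + br a (de b) + al a * de b - de a * al b.

Definition locally_nilpotent (A : comAlgType k) (D : A -> A) : Prop :=
  forall a : A, exists n : nat, iter n D a == 0.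

(* (L, iota, x, xinv) is the Laurent polynomial ring B[x^{+-1}] over B:
   iota : B -> L is a k-algebra map, x is invertible with inverse xinv,
   every element is xinv^m * (polynomial in x with coefficients in iota(B)),
   and the monomials x^i are free over iota(B) (so iota is injective and
   x is transcendental over B). *)
Definition is_laurent_ring (B L : comAlgType k) (iota : B -> L) (x xinv : L)
  : Prop :=
  [/\ kalg_hom iota,
      x * xinv = 1,
      (forall f : L, exists (m N : nat) (c : nat -> B),
          f = xinv ^+ m * \sum_(i < N) iota (c i) * x ^+ i)
    & (forall (N : nat) (c : nat -> B),
          \sum_(i < N) iota (c i) * x ^+ i = 0 -> forall i, (i < N)%N -> c i = 0)].

(* The Poisson structure of B[x^{+-1}; alpha, delta]_p: a Poisson bracket brL on
   the Laurent ring L extending brB, with {x, b} = alpha(b) x + delta(b). *)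
Definition is_skew_laurent_bracket (B L : comAlgType k) (brB : B -> B -> B)
  (al de : B -> B) (iota : B -> L) (x : L) (brL : L -> L -> L) : Prop :=
  [/\ poisson_bracket brL,
      (forall a b : B, brL (iota a) (iota b) = iota (brB a b))
    & (forall b : B, brL x (iota b) = iota (al b) * x + iota (de b))].

(* theta(b) = sum_{n >= 0} 1/n! (-1/s)^n delta^n(b) x^{-n}; the sum is finite
   since delta is locally nilpotent: we sum up to the nilpotency index of b. *)
Definition theta (B L : comAlgType k) (de : B -> B) (hnil : locally_nilpotent de)
  (s : k) (iota : B -> L) (xinv : L) (b : B) : L :=
  \sum_(n < ex_minn (hnil b))
     (((n`!)%:R)^-1 * (- s^-1) ^+ n) *: (iota (iter n de b) * xinv ^+ n).

End PoissonDefs.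

(* Main.v *)
Require Import Defs.
From HB Require Import structures.
From mathcomp Require Import all_boot all_order all_algebra.
From mathcomp Require Import ring.
Import Order.TTheory GRing.Theory Num.Theory.
Set Implicit Arguments. Unset Strict Implicit. Unset Printing Implicit Defensive.
Local Open Scope ring_scope.

Lemma sum_nat0 (R : nmodType) m n (F : nat -> R) :
  (forall i, (m <= i < n)%N -> F i = 0) -> \sum_(m <= i < n) F i = 0.
Proof. by move=> H; rewrite big_nat_cond big1 // => i /andP[/H ->]. Qed.

Lemma regroup (R : comNzRingType) (y : R) (M : nat) (F : nat -> nat -> R) :
  (forall i j, (M <= j)%N -> F i j = 0) ->
  (forall i j, (M <= i)%N -> F i j = 0) ->
  \sum_(i < M) \sum_(j < M) F i j * y ^+ (i + j)%N =
  \sum_(n < M + M) (\sum_(i < n.+1) F i (n - i)%N) * y ^+ n.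
Proof.
move=> Hj Hi.
pose G i n := if (i <= n)%N then F i (n - i)%N else 0.
have E1 : forall i, (i < M)%N ->
   \sum_(j < M) F i j * y ^+ (i + j)%N = \sum_(n < M + M) G i n * y ^+ n.
  move=> i iM.
  rewrite -(big_mkord xpredT (fun j => F i j * y ^+ (i + j)%N)).
  rewrite -(big_mkord xpredT (fun n => G i n * y ^+ n)).
  rewrite [RHS](big_cat_nat (n := i)) //=; last by rewrite (leq_trans (ltnW iM)) // leq_addr.
  rewrite [X in X + _]sum_nat0 ?add0r; last first.
    by move=> n /andP[_ ni]; rewrite /G leqNgt ni /= mul0r.
  rewrite [RHS](_ : _ = \sum_(0 + i <= n < M + M) G i n * y ^+ n) // big_addn.
  rewrite [RHS](big_cat_nat (n := M)) //=; last by rewrite leq_subRL ?leq_add2r // (leq_trans (ltnW iM)) // leq_addr.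
  rewrite [X in _ + X]sum_nat0 ?addr0; last first.
    by move=> j /andP[Mj _]; rewrite /G leq_addl addnK Hj // mul0r.
  by apply: eq_bigr => j _; rewrite /G leq_addl addnK addnC.
rewrite (eq_bigr (fun i : 'I_M => \sum_(n < M + M) G i n * y ^+ n)); last by move=> i _; apply: E1.
rewrite exchange_big /=; apply: eq_bigr => n _; rewrite -mulr_suml; congr (_ * _).
have nM : (n < M + M)%N by [].
rewrite -(big_mkord xpredT (fun i => G i n)) -(big_mkord xpredT (fun i => F i (n - i)%N)).
transitivity (\sum_(0 <= i < M + M) G i n).
  rewrite [RHS](big_cat_nat (n := M)) //= ?leq_addr // [X in _ + X]sum_nat0 ?addr0 //.
  by move=> i /andP[Mi _]; rewrite /G Hi //; case: ifP.
rewrite [LHS](big_cat_nat (n := n.+1)) //= [X in _ + X]sum_nat0 ?addr0 //.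
  by apply: eq_big_nat => i /andP[_ ilt]; rewrite /G -ltnS ilt.
by move=> i /andP[ni _]; rewrite /G leqNgt ni.
Qed.

Section Lin.
Variables (k : fieldType) (U V : lmodType k) (f : U -> V).
Hypothesis hf : forall (c : k) a b, f (c *: a + b) = c *: f a + f b.

Lemma lf0 : f 0 = 0.
Proof.
have := hf 1 0 0; rewrite scaler0 addr0 scale1r => /eqP.
by rewrite -{1}[f 0]add0r (inj_eq (addIr _)) eq_sym => /eqP.
Qed.
Lemma lfD a b : f (a + b) = f a + f b.
Proof. by have := hf 1 a b; rewrite !scale1r. Qed.
Lemma lfZ c a : f (c *: a) = c *: f a.
Proof. by have := hf c a 0; rewrite !addr0 lf0 addr0. Qed.
Lemma lfN a : f (- a) = - f a.
Proof. by rewrite -scaleN1r lfZ scaleN1r. Qed.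
Lemma lfB a b : f (a - b) = f a - f b.
Proof. by rewrite lfD lfN. Qed.
Lemma lfMn a n : f (a *+ n) = f a *+ n.
Proof. by elim: n => [|n IH]; rewrite ?mulr0n ?lf0 // !mulrS lfD IH. Qed.
Lemma lfsum (I : Type) (r : seq I) (P : pred I) (F : I -> U) :
  f (\sum_(i <- r | P i) F i) = \sum_(i <- r | P i) f (F i).
Proof. exact: (big_morph f lfD lf0). Qed.
End Lin.

Section Conv.
Variables (V : zmodType) (op : V -> V -> V).
Hypothesis hl : forall x y m, op (x *+ m) y = op x y *+ m.
Hypothesis hr : forall x y m, op x (y *+ m) = op x y *+ m.

Definition conv (f g : nat -> V) n := \sum_(i < n.+1) op (f i) (g (n - i)%N).

Lemma op0l y : op 0 y = 0.
Proof. by have := hl 0 y 0; rewrite !mulr0n. Qed.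
Lemma op0r y : op y 0 = 0.
Proof. by have := hr y 0 0; rewrite !mulr0n. Qed.

Lemma conv_shiftl (f g : nat -> V) n :
  \sum_(i < n.+2) op (f i *+ i) (g (n.+1 - i)%N) =
  \sum_(i < n.+1) op (f i.+1 *+ i.+1) (g (n - i)%N).
Proof. by rewrite big_ord_recl /= mulr0n op0l add0r. Qed.

Lemma conv_shiftr (f g : nat -> V) n :
  \sum_(i < n.+2) op (f i) (g (n.+1 - i)%N *+ (n.+1 - i)%N) =
  \sum_(i < n.+1) op (f i) (g (n - i).+1 *+ (n - i).+1).
Proof.
rewrite big_ord_recr /= subnn mulr0n op0r addr0.
by apply: eq_bigr => i _; rewrite /= subSn // -ltnS.
Qed.

Lemma conv_deriv (f g : nat -> V) n :
  conv f g n.+1 *+ n.+1 =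
  conv (fun i => f i.+1 *+ i.+1) g n + conv f (fun j => g j.+1 *+ j.+1) n.
Proof.
rewrite /conv -sumrMnl.
rewrite (eq_bigr (fun i : 'I_n.+2 => op (f i *+ i) (g (n.+1 - i)%N) +
            op (f i) (g (n.+1 - i)%N *+ (n.+1 - i)%N))); last first.
  by move=> i _; rewrite hl hr -mulrnDr subnKC // -ltnS.
by rewrite big_split /= conv_shiftl conv_shiftr.
Qed.
End Conv.

Lemma sum_ext (V : nmodType) K M (F : nat -> V) : (K <= M)%N ->
  (forall n, (K <= n)%N -> F n = 0) -> \sum_(n < K) F n = \sum_(n < M) F n.
Proof.
move=> KM H; rewrite (big_ord_widen M F KM) big_mkcond; apply: eq_bigr => i _.
by case: ifP => // /negbT; rewrite -leqNgt => /H ->.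
Qed.

Section Main.
Variables (k : fieldType) (B : comAlgType k) (brB : B -> B -> B) (al de : B -> B) (s : k).
Hypothesis hchar : [pchar k] =i pred0.
Hypothesis hB : poisson_bracket brB.
Hypothesis hal : poisson_derivation brB al.
Hypothesis hde : derivation de.
Hypothesis hcompat : skew_poisson_compat brB al de.
Hypothesis hnil : locally_nilpotent de.
Hypothesis hs : s != 0.
Hypothesis hcomm : forall b : B, al (de b) = de (al b + s *: b).
Variables (L : comAlgType k) (iota : B -> L) (x xinv : L) (brL : L -> L -> L).
Hypothesis hL : is_laurent_ring iota x xinv.
Hypothesis hbrL : is_skew_laurent_bracket brB al de iota x brL.

Let c := - s^-1.
Let nN b := ex_minn (hnil b).
Let Y := xinv.
Definition e_def b n := ((n`!)%:R^-1 * c ^+ n) *: iter n de b.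
Fact e_key : unit. Proof. by []. Qed.
Definition e := locked_with e_key e_def.
Lemma eE : e = e_def. Proof. exact: unlock. Qed.

Lemma natk_neq0 n : (n.+1%:R : k) != 0.
Proof. by have /pcharf0P H := hchar; rewrite H. Qed.
Lemma fact_neq0 n : ((n`!)%:R : k) != 0.
Proof. by rewrite -(prednK (fact_gt0 n)) natk_neq0. Qed.
Lemma c_neq0 : c != 0.
Proof. by rewrite oppr_eq0 invr_eq0. Qed.

Lemma deL : forall (a : k) u v, de (a *: u + v) = a *: de u + de v.
Proof. by case: hde. Qed.
Lemma deM u v : de (u * v) = de u * v + u * de v.
Proof. by case: hde. Qed.
Lemma alL : forall (a : k) u v, al (a *: u + v) = a *: al u + al v.
Proof. by case: hal => -[]. Qed.
Lemma alM u v : al (u * v) = al u * v + u * al v.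
Proof. by case: hal => -[]. Qed.
Lemma ioL : forall (a : k) u v, iota (a *: u + v) = a *: iota u + iota v.
Proof. by case: hL => -[]. Qed.
Lemma ioM u v : iota (u * v) = iota u * iota v.
Proof. by case: hL => -[]. Qed.
Lemma io1 : iota 1 = 1.
Proof. by case: hL => -[]. Qed.
Lemma xY : x * Y = 1.
Proof. by case: hL. Qed.
Lemma brBL1 : forall (a : k) u v w, brB (a *: u + v) w = a *: brB u w + brB v w.
Proof. by case: hB. Qed.
Lemma brBL2 : forall (a : k) u v w, brB w (a *: u + v) = a *: brB w u + brB w v.
Proof. by case: hB. Qed.

Lemma iter_de0 b n : (nN b <= n)%N -> iter n de b = 0.
Proof.
rewrite /nN; case: ex_minnP => m /eqP Hm _ le.
rewrite -(subnK le) iterD Hm; elim: (n - m)%N => //= j ->.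
exact: (lf0 deL).
Qed.

Lemma e0 b : e b 0 = b.
Proof. by rewrite eE /e_def /= invr1 mul1r scale1r. Qed.

Lemma e_big b n : (nN b <= n)%N -> e b n = 0.
Proof. by move=> H; rewrite eE /e_def iter_de0 // scaler0. Qed.

Lemma e_rec b n : e b n.+1 *+ n.+1 = c *: de (e b n).
Proof.
rewrite eE /e_def -scaler_nat scalerA (lfZ deL) scalerA iterS.
congr (_ *: _); rewrite factS natrM invfM exprS.
field; by rewrite fact_neq0 addrC natr1 natk_neq0.
Qed.

Lemma cancel_nat (u v : B) n : u *+ n.+1 = v *+ n.+1 -> u = v.
Proof.
rewrite -!scaler_nat => /(congr1 ( *:%R (n.+1%:R)^-1)).
by rewrite !scalerA mulVf ?natk_neq0 // !scale1r.
Qed.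

Lemma ode_uniq (f g : nat -> B) : f 0 = g 0 ->
  (forall n, f n.+1 *+ n.+1 = c *: de (f n)) ->
  (forall n, g n.+1 *+ n.+1 = c *: de (g n)) -> forall n, f n = g n.
Proof.
move=> h0 hf hg; elim=> [//|n IH]; apply: (@cancel_nat _ _ n).
by rewrite hf hg IH.
Qed.

Lemma brBl x1 y1 m : brB (x1 *+ m) y1 = brB x1 y1 *+ m.
Proof. exact: (lfMn (f := fun u => brB u y1) (fun a u v => brBL1 a u v y1)). Qed.
Lemma brBr x1 y1 m : brB x1 (y1 *+ m) = brB x1 y1 *+ m.
Proof. exact: (lfMn (f := fun u => brB x1 u) (fun a u v => brBL2 a u v x1)). Qed.

Definition convM := conv (@GRing.mul B).
Definition convB := conv brB.

Lemma conv_mul a b n : e (a * b) n = convM (e a) (e b) n.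
Proof.
apply: ode_uniq => {n} [|n|n].
- by rewrite /convM /conv big_ord1 /= !e0.
- exact: e_rec.
rewrite /convM conv_deriv; [|exact: mulrnAl|exact: mulrnAr].
rewrite /conv (lfsum deL) scaler_sumr -big_split /=; apply: eq_bigr => i _.
by rewrite !e_rec deM scalerDr scalerAl scalerAr.
Qed.

Definition K a b n :=
  convM (fun i => al (e a i)) (fun j => de (e b j)) n -
  convM (fun i => de (e a i)) (fun j => al (e b j)) n.


Lemma K_rec a b n : K a b n.+1 *+ n.+1 = c *: de (K a b n).
Proof.
rewrite /K mulrnBl /convM !conv_deriv; try (exact: mulrnAl || exact: mulrnAr).
rewrite /conv (lfB deL) !(lfsum deL) scalerBr !scaler_sumr.
rewrite -!big_split -!sumrB /=; apply: eq_bigr => i _.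
rewrite -!(lfMn alL) -!(lfMn deL) !e_rec !(lfZ alL) !(lfZ deL) !hcomm !deM.
rewrite !(lfD deL) !(lfZ deL).
pose cA : B := c%:A; pose sA : B := s%:A.
have hc z : c *: z = cA * z by rewrite /cA mulr_algl.
have hs' z : s *: z = sA * z by rewrite /sA mulr_algl.
rewrite !hc !hs'; ring.
Qed.

Lemma brBZl (r : k) u v : brB (r *: u) v = r *: brB u v.
Proof. exact: (lfZ (f := fun u => brB u v) (fun a u1 v1 => brBL1 a u1 v1 v)). Qed.
Lemma brBZr (r : k) u v : brB v (r *: u) = r *: brB v u.
Proof. exact: (lfZ (f := fun u => brB v u) (fun a u1 v1 => brBL2 a u1 v1 v)). Qed.

Lemma convB_rec a b n :
  convB (e a) (e b) n.+1 *+ n.+1 = c *: de (convB (e a) (e b) n) - c *: K a b n.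
Proof.
rewrite /convB conv_deriv; [|exact: brBl|exact: brBr].
rewrite /K /convM /conv (lfsum deL) -sumrB !scaler_sumr -sumrB -big_split /=.
apply: eq_bigr => i _.
rewrite !e_rec brBZl brBZr hcompat.
pose cA : B := c%:A.
have hc z : c *: z = cA * z by rewrite /cA mulr_algl.
rewrite !hc; ring.
Qed.

Definition Gs a b n := if n is m.+1 then convB (e a) (e b) n + c *: K a b m
  else convB (e a) (e b) 0.

Lemma e_br a b n : e (brB a b) n = Gs a b n.
Proof.
apply: ode_uniq => {n} [|n|n].
- by rewrite /Gs /convB /conv big_ord1 /= !e0.
- exact: e_rec.
case: n => [|m].
  by rewrite /= mulrnDl convB_rec subrK.
have gen (dX Kv : B) : c *: dX - c *: Kv + (c *: Kv) *+ m.+2 = c *: (dX + Kv *+ m.+1).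
  by rewrite scalerDr -scalerMnr; ring.
by rewrite /Gs mulrnDl convB_rec (lfD deL) (lfZ deL) -K_rec gen.
Qed.

Definition X a b i j := brB (e a i) (e b j) + al (e a i) * (e b j *+ j)
  - (e a i *+ i) * al (e b j).

Lemma H_eq a b n : \sum_(i < n.+1) X a b i (n - i)%N = Gs a b n.
Proof.
case: n => [|m].
  by rewrite big_ord1 /X /= !mulr0n mulr0 mul0r subr0 addr0 /Gs /convB /conv big_ord1.
rewrite /X sumrB big_split /=.
rewrite (conv_shiftr (@mulrnAr B) (fun i => al (e a i)) (e b)).
rewrite (conv_shiftl (@mulrnAl B) (e a) (fun j => al (e b j))).
rewrite /Gs /K /convM /conv scalerBr !scaler_sumr -addrA; congr (_ + (_ - _)).
  by apply: eq_bigr => i _; rewrite e_rec scalerAr.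
by apply: eq_bigr => i _; rewrite e_rec scalerAl.
Qed.

Lemma brLL1 : forall (a : k) u v w, brL (a *: u + v) w = a *: brL u w + brL v w.
Proof. by case: hbrL => -[]. Qed.
Lemma brLL2 : forall (a : k) u v w, brL w (a *: u + v) = a *: brL w u + brL w v.
Proof. by case: hbrL => -[]. Qed.
Lemma brLaa u : brL u u = 0.
Proof. by case: hbrL => -[]. Qed.
Lemma brLM u v w : brL u (v * w) = brL u v * w + v * brL u w.
Proof. by case: hbrL => -[]. Qed.
Lemma brLio u v : brL (iota u) (iota v) = iota (brB u v).
Proof. by case: hbrL. Qed.
Lemma brLx u : brL x (iota u) = iota (al u) * x + iota (de u).
Proof. by case: hbrL. Qed.

Lemma brLDl u v w : brL (u + v) w = brL u w + brL v w.
Proof. exact: (lfD (f := fun u => brL u w) (fun a u1 v1 => brLL1 a u1 v1 w)). Qed.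
Lemma brLDr u v w : brL w (u + v) = brL w u + brL w v.
Proof. exact: (lfD (f := fun u => brL w u) (fun a u1 v1 => brLL2 a u1 v1 w)). Qed.
Lemma brLsuml (I : Type) (r : seq I) (F : I -> L) w :
  brL (\sum_(i <- r) F i) w = \sum_(i <- r) brL (F i) w.
Proof. exact: (lfsum (f := fun u => brL u w) (fun a u1 v1 => brLL1 a u1 v1 w)). Qed.
Lemma brLsumr (I : Type) (r : seq I) (F : I -> L) w :
  brL w (\sum_(i <- r) F i) = \sum_(i <- r) brL w (F i).
Proof. exact: (lfsum (f := fun u => brL w u) (fun a u1 v1 => brLL2 a u1 v1 w)). Qed.

Lemma brL_anti u v : brL u v = - brL v u.
Proof.
have := brLaa (u + v); rewrite brLDl !brLDr !brLaa add0r addr0 => /eqP.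
by rewrite addr_eq0 => /eqP.
Qed.

Lemma brLMl u v w : brL (u * v) w = brL u w * v + u * brL v w.
Proof. by rewrite brL_anti brLM [brL u w]brL_anti [brL v w]brL_anti; ring. Qed.

Lemma brL1 u : brL u 1 = 0.
Proof.
have := brLM u 1 1; rewrite !mulr1 !mul1r => h.
have : brL u 1 + brL u 1 - brL u 1 = 0 by rewrite -h subrr.
by rewrite addrK.
Qed.

Lemma Yx : Y * x = 1.
Proof. by rewrite mulrC xY. Qed.

Lemma cancelY z w : z * Y = w * Y -> z = w.
Proof.
move=> h; rewrite -[z]mulr1 -[w]mulr1 -Yx !mulrA h //.
Qed.

Lemma brL_ioY u : brL (iota u) Y = iota (al u) * Y + iota (de u) * Y ^+ 2.
Proof.
have h : x * brL (iota u) Y = (iota (al u) * x + iota (de u)) * Y.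
  have := brLM (iota u) x Y; rewrite xY brL1 brL_anti brLx.
  move=> h; apply/eqP; rewrite -subr_eq0; apply/eqP.
  by rewrite [RHS]h; ring.
transitivity (Y * (x * brL (iota u) Y)); first by rewrite mulrA Yx mul1r.
rewrite h.
have -> : Y * ((iota (al u) * x + iota (de u)) * Y) =
   iota (al u) * (x * Y) * Y + iota (de u) * Y ^+ 2 by ring.
by rewrite xY mulr1.
Qed.

Lemma brL_Ypow u j : brL u (Y ^+ j) * Y = (brL u Y * Y ^+ j) *+ j.
Proof.
elim: j => [|j IH]; first by rewrite expr0 brL1 mul0r mulr0n.
rewrite exprS brLM mulrDl -[Y * _ * Y]mulrA IH.
have gen (z y : L) : z * y ^+ j * y + y * (z * y ^+ j *+ j) = z * (y * y ^+ j) *+ j.+1.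
  by ring.
exact: gen.
Qed.

Lemma brL_ioYj u j :
  brL (iota u) (Y ^+ j) = (iota (al u) * Y ^+ j + iota (de u) * Y ^+ j.+1) *+ j.
Proof.
apply: cancelY; rewrite brL_Ypow brL_ioY.
have gen (p q y : L) : (p * y + q * y ^+ 2) * y ^+ j *+ j = (p * y ^+ j + q * y ^+ j.+1) *+ j * y.
  by rewrite !exprS; ring.
exact: gen.
Qed.

Lemma brL_YY i j : brL (Y ^+ i) (Y ^+ j) = 0.
Proof.
have h1 : forall i, brL Y (Y ^+ i) = 0.
  move=> i0; apply: cancelY; rewrite brL_Ypow brLaa mul0r mul0rn mul0r //.
have h2 : brL (Y ^+ i) Y = 0 by rewrite brL_anti h1 oppr0.
apply: cancelY; rewrite brL_Ypow h2 mul0r mul0rn mul0r //.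
Qed.

Lemma brL_term u v i j :
  brL (iota u * Y ^+ i) (iota v * Y ^+ j) =
  iota (brB u v + al u * (v *+ j) - (u *+ i) * al v) * Y ^+ (i + j)%N +
  iota (de u * (v *+ j) - (u *+ i) * de v) * Y ^+ (i + j)%N.+1.
Proof.
rewrite brLMl !brLM brLio brL_ioYj brL_YY [brL (Y ^+ i) (iota v)]brL_anti brL_ioYj.
rewrite !(lfB ioL) !(lfD ioL) !ioM !(lfMn ioL) !exprS exprD.
ring.
Qed.

Lemma thetaE b M : (nN b <= M)%N ->
  theta hnil s iota xinv b = \sum_(n < M) iota (e b n) * Y ^+ n.
Proof.
move=> H; rewrite /theta (sum_ext (M := M) (F := fun n => ((n`!)%:R^-1 * (- s^-1) ^+ n) *: (iota (iter n de b) * xinv ^+ n))) //.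
  by apply: eq_bigr => n _; rewrite eE /e_def (lfZ ioL) -scalerAl.
by move=> n Hn; rewrite iter_de0 // (lf0 ioL) mul0r scaler0.
Qed.

Lemma iter0 n : iter n de 0 = 0.
Proof. by elim: n => //= n ->; exact: (lf0 deL). Qed.

Lemma iter_lin n (r : k) a b : iter n de (r *: a + b) = r *: iter n de a + iter n de b.
Proof. by elim: n => //= n ->; rewrite deL. Qed.

Lemma e_lin r a b n : e (r *: a + b) n = r *: e a n + e b n.
Proof. by rewrite eE /e_def iter_lin scalerDr !scalerA mulrC. Qed.

Lemma de1 : de 1 = 0.
Proof.
have := deM 1 1; rewrite !mulr1 !mul1r => h.
have : de 1 + de 1 - de 1 = 0 by rewrite -h subrr.
by rewrite addrK.
Qed.

Lemma brB0r u : brB u 0 = 0.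
Proof. exact: (lf0 (f := fun v => brB u v) (fun a u1 v1 => brBL2 a u1 v1 u)). Qed.
Lemma brB0l u : brB 0 u = 0.
Proof. exact: (lf0 (f := fun v => brB v u) (fun a u1 v1 => brBL1 a u1 v1 u)). Qed.

Lemma theta_lin (r : k) a b : theta hnil s iota xinv (r *: a + b) =
  r *: theta hnil s iota xinv a + theta hnil s iota xinv b.
Proof.
pose M := maxn (nN (r *: a + b)) (maxn (nN a) (nN b)).
rewrite (@thetaE (r *: a + b) M) ?(@thetaE a M) ?(@thetaE b M);
  try by rewrite /M !leq_max leqnn ?orbT.
rewrite scaler_sumr -big_split; apply: eq_bigr => n _.
by rewrite e_lin ioL mulrDl scalerAl.
Qed.

Lemma theta_one : theta hnil s iota xinv 1 = 1.
Proof.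
rewrite (@thetaE 1 (nN 1).+1) // big_ord_recl e0 io1 expr0 mulr1.
rewrite big1 ?addr0 // => i _.
have h : forall n, iter n.+1 de 1 = 0 by move=> n; rewrite iterSr de1 iter0.
by rewrite eE /e_def h scaler0 (lf0 ioL) mul0r.
Qed.

Lemma theta_mul a b : theta hnil s iota xinv (a * b) =
  theta hnil s iota xinv a * theta hnil s iota xinv b.
Proof.
pose M := maxn (nN a) (maxn (nN b) (nN (a * b))).
have Ma : (nN a <= M)%N by rewrite /M !leq_max leqnn ?orbT.
have Mb : (nN b <= M)%N by rewrite /M !leq_max leqnn ?orbT.
have Mab : (nN (a * b) <= M + M)%N.
  by rewrite (leq_trans _ (leq_addl M M)) // /M !leq_max leqnn ?orbT.
rewrite (@thetaE (a * b) (M + M)) // (@thetaE a M) // (@thetaE b M) //.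
rewrite big_distrlr /=.
rewrite (eq_bigr (fun i : 'I_M => \sum_(j < M) iota (e a i * e b j) * Y ^+ (i + j)%N)); last first.
  by move=> i _; apply: eq_bigr => j _; rewrite ioM exprD; ring.
rewrite (regroup Y (M := M) (F := fun i j => iota (e a i * e b j))).
- apply: eq_bigr => n _; congr (_ * _).
  by rewrite conv_mul /convM /conv (lfsum ioL).
- by move=> i j Hj; rewrite (e_big (b := b)) ?mulr0 ?(lf0 ioL) // (leq_trans Mb).
- by move=> i j Hi; rewrite (e_big (b := a)) ?mul0r ?(lf0 ioL) // (leq_trans Ma).
Qed.

Lemma sumA w M : (nN w <= M)%N ->
  \sum_(i < M) iota (de (e w i)) * Y ^+ i.+1 =
  c^-1 *: \sum_(i < M) iota (e w i *+ i) * Y ^+ i.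
Proof.
move=> Hw.
have hd i : de (e w i) = c^-1 *: (e w i.+1 *+ i.+1).
  by rewrite e_rec scalerA mulVf ?c_neq0 // scale1r.
transitivity (c^-1 *: \sum_(i < M) iota (e w i.+1 *+ i.+1) * Y ^+ i.+1).
  by rewrite scaler_sumr; apply: eq_bigr => i _; rewrite hd (lfZ ioL) scalerAl.
congr (_ *: _).
pose g i := iota (e w i *+ i) * Y ^+ i.
transitivity (\sum_(i < M.+1) g i).
  by rewrite big_ord_recl /g mulr0n (lf0 ioL) mul0r add0r.
by rewrite big_ord_recr /= /g e_big // mul0rn (lf0 ioL) mul0r addr0.
Qed.

Lemma Zpart a b M : (nN a <= M)%N -> (nN b <= M)%N ->
  \sum_(i < M) \sum_(j < M)
     iota (de (e a i) * (e b j *+ j) - (e a i *+ i) * de (e b j)) * Y ^+ (i + j)%N.+1 = 0.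
Proof.
move=> Ha Hb.
transitivity ((\sum_(i < M) iota (de (e a i)) * Y ^+ i.+1) *
               (\sum_(j < M) iota (e b j *+ j) * Y ^+ j) -
              (\sum_(i < M) iota (e a i *+ i) * Y ^+ i) *
               (\sum_(j < M) iota (de (e b j)) * Y ^+ j.+1)).
  rewrite !big_distrlr -sumrB; apply: eq_bigr => i _; rewrite -sumrB.
  apply: eq_bigr => j _; rewrite (lfB ioL) !ioM !exprS exprD.
  have gen (p q r t y Yi Yj : L) : (p * q - r * t) * (y * (Yi * Yj)) =
    (p * (y * Yi)) * (q * Yj) - (r * Yi) * (t * (y * Yj)) by ring.
  exact: gen.
by rewrite !sumA // -scalerAl -scalerAr subrr.
Qed.

Lemma theta_br a b : theta hnil s iota xinv (brB a b) =
  brL (theta hnil s iota xinv a) (theta hnil s iota xinv b).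
Proof.
pose M := maxn (nN a) (maxn (nN b) (nN (brB a b))).
have Ma : (nN a <= M)%N by rewrite /M !leq_max leqnn ?orbT.
have Mb : (nN b <= M)%N by rewrite /M !leq_max leqnn ?orbT.
have Mab : (nN (brB a b) <= M + M)%N.
  by rewrite (leq_trans _ (leq_addl M M)) // /M !leq_max leqnn ?orbT.
rewrite (@thetaE (brB a b) (M + M)) // (@thetaE a M) // (@thetaE b M) //.
rewrite brLsuml.
rewrite (eq_bigr (fun i : 'I_M => \sum_(j < M) brL (iota (e a i) * Y ^+ i) (iota (e b j) * Y ^+ j))); last first.
  by move=> i _; rewrite brLsumr.
rewrite (eq_bigr (fun i : 'I_M => \sum_(j < M) iota (X a b i j) * Y ^+ (i + j)%N +
   \sum_(j < M) iota (de (e a i) * (e b j *+ j) - (e a i *+ i) * de (e b j)) * Y ^+ (i + j)%N.+1)); last first.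
  by move=> i _; rewrite -big_split; apply: eq_bigr => j _; rewrite brL_term.
rewrite big_split /= Zpart // addr0.
rewrite (regroup Y (M := M) (F := fun i j => iota (X a b i j))).
- apply: eq_bigr => n _; congr (_ * _).
  by rewrite -(lfsum ioL) H_eq e_br.
- by move=> i j Hj; rewrite /X (e_big (b := b)) ?(leq_trans Mb) // brB0r mul0rn mulr0 (lf0 alL) mulr0 subr0 addr0 (lf0 ioL).
- by move=> i j Hi; rewrite /X (e_big (b := a)) ?(leq_trans Ma) // brB0l mul0rn mul0r (lf0 alL) mul0r subr0 addr0 (lf0 ioL).
Qed.

End Main.

Theorem lemma3p7 (k : fieldType) (hchar : [pchar k] =i pred0)
  (B : comAlgType k) (brB : B -> B -> B) (al de : B -> B) (s : k)
  (hB : poisson_bracket brB)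
  (hal : poisson_derivation brB al)
  (hde : derivation de)
  (hcompat : skew_poisson_compat brB al de)
  (hnil : locally_nilpotent de)
  (hs : s != 0)
  (hcomm : forall b : B, al (de b) = de (al b + s *: b))
  (L : comAlgType k) (iota : B -> L) (x xinv : L) (brL : L -> L -> L)
  (hL : is_laurent_ring iota x xinv)
  (hbrL : is_skew_laurent_bracket brB al de iota x brL) :
  kalg_hom (theta hnil s iota xinv) /\
  (forall a b : B,
      theta hnil s iota xinv (brB a b)
      = brL (theta hnil s iota xinv a) (theta hnil s iota xinv b)).
Proof.
split; last first.
  by move=> a b; exact: (theta_br hchar hB hal hde hcompat hnil hs hcomm hL hbrL).
split.
- by move=> r a b; exact: (theta_lin s hde hnil hL).
- by move=> a b; exact: (theta_mul s hchar hde hnil hL).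
- exact: (theta_one s hde hnil hL).
Qed.
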